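(* Let $(G,c)$ be a W-state graph, let $X,X'$ be the vertex sets of the two connected components of $G_m=(V(G),E_m(G))$, and let $\{x,x'\}$ be a two-vertex cut of $G$ with $x\in X$ and $x'\in X'$. Let $C_1,\dots,C_t$ be the connected components of $G-\{x,x'\}$. Then each W-block $(H_i,c_i)$, $i\in\{1,\dots,t\}$, of $(G,c)$ with respect to $\{x,x'\}$ is a W-state graph.
   Context: Graphs may have parallel edges but no loops. A half-edge $2$-colouring $c$ of $G$ assigns to each pair $(e,w)$ with $w$ an endpoint of edge $e$ a colour in $\{0,1\}$ (0 = blue, 1 = red). An edge $e=uv$ is bichromatic if $c(e,u)\neq c(e,v)$ and monochromatic otherwise; $E_m(G)$ is the set of monochromatic edges; standing convention: monochromatic edges are blue at both ends. A graph is matching-covered if every edge lies in some perfect matching. A W-state graph is a half-edge $2$-coloured matching-covered graph $(G,c)$ in which every perfect matching contains exactly one bichromatic edge, and every vertex $v$ is incident with an edge $e$ with $c(e,v)=1$. For any W-state graph, $G_m$ has exactly two connected components. W-blocks: for each $i$, start from $H_i:=G[V(C_i)\cup\{x,x'\}]$ (induced subgraph, keeping all parallel edges) with colouring $c_i$ agreeing with $c$ on its edges, and modify as follows. (1) If $x$ is not incident in $H_i$ with an edge whose half at $x$ is red, add a new bichromatic edge between $x$ and $x'$ whose red half is at $x$; likewise, if $x'$ is not incident in $H_i$ with an edge whose half at $x'$ is red, add a new bichromatic edge between $x$ and $x'$ whose red half is at $x'$. (2) If after this $H_i$ still contains no bichromatic edge between $x$ and $x'$, add a new bichromatic edge between $x$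 and $x'$ (with the red half at either endpoint). The resulting $(H_i,c_i)$ are the W-blocks. *)

(* Defs.v *)
From HB Require Import structures.
From mathcomp Require Import all_boot.
Set Implicit Arguments. Unset Strict Implicit. Unset Printing Implicit Defensive.

(* Finite multigraph (parallel edges allowed) with a half-edge 2-colouring.
   Each edge e has two ends src e, tgt e; csrc e (resp. ctgt e) is the colour
   of the half of e at src e (resp. tgt e).  true = red (1), false = blue (0). *)
Record mgraph := MGraph {
  vtx : finType;
  edg : finType;
  src : edg -> vtx;
  tgt : edg -> vtx;
  csrc : edg -> bool;
  ctgt : edg -> bool }.

Section Basics.
Variable G : mgraph.

Definition loopless := forall e : edg G, src e != tgt e.

Definition incident (e : edg G) (v : vtx G) := (src e == v) || (tgt e == v).

Definition colour (e : edg G) (w : vtx G) := if src e == w then csrc e else ctgt e.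

Definition bichromatic (e : edg G) := csrc e != ctgt e.

Definition joins (e : edg G) (u v : vtx G) :=
  ((src e == u) && (tgt e == v)) || ((src e == v) && (tgt e == u)).

Definition perfect_matching (M : {set edg G}) :=
  forall v : vtx G, #|[set e in M | incident e v]| = 1.

Definition matching_covered :=
  forall e : edg G, exists M : {set edg G}, perfect_matching M /\ e \in M.

Definition mono_blue := forall e : edg G, ~~ bichromatic e -> ~~ csrc e /\ ~~ ctgt e.

Definition Wstate :=
  [/\ loopless, mono_blue, matching_covered,
      (forall M, perfect_matching M -> #|[set e in M | bichromatic e]| = 1)
    & (forall v : vtx G, exists e : edg G, incident e v /\ colour e v = true)].

(* adjacency in G_m = (V(G), E_m(G)) *)
Definition mrel : rel (vtx G) :=
  fun u v => [exists e : edg G, ~~ bichromatic e && joins e u v].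

Definition adj : rel (vtx G) := fun u v => [exists e : edg G, joins e u v].

Definition adj_minus (S : {set vtx G}) : rel (vtx G) :=
  fun u v => [&& u \notin S, v \notin S & adj u v].

Definition is_component (r : rel (vtx G)) (A : {set vtx G}) :=
  exists v, A = [set u | connect r v u].

Definition two_vertex_cut (x x' : vtx G) :=
  x != x' /\ exists u v : vtx G,
    [/\ u \notin [set x; x'], v \notin [set x; x'] &
        ~~ connect (adj_minus [set x; x']) u v].

Definition component_minus (x x' : vtx G) (C : {set vtx G}) :=
  exists2 v, v \notin [set x; x'] & C = [set u | connect (adj_minus [set x; x']) v u].

End Basics.
Arguments mrel : clear implicits.
Arguments adj : clear implicits.

Section WBlock.
Variables (G : mgraph) (x x' : vtx G) (C : {set vtx G}).
(* choice of the endpoint carrying the red half of the edge added in step (2):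
   redx2 = true : red half at x; redx2 = false : red half at x' *)
Variable redx2 : bool.

Definition bset : {set vtx G} := x |: (x' |: C).

Lemma bset_x : x \in bset.
Proof. by rewrite /bset setU11. Qed.
Lemma bset_x' : x' \in bset.
Proof. by rewrite /bset !inE eqxx orbT. Qed.

Definition bV : finType := {v : vtx G | v \in bset}.
(* edges of the induced subgraph G[V(C) ∪ {x,x'}] (all parallel edges kept) *)
Definition oldE : finType := {e : edg G | (src e \in bset) && (tgt e \in bset)}.

Definition bx : bV := exist _ x bset_x.
Definition bx' : bV := exist _ x' bset_x'.

Definition red_at_x := [exists e : oldE, incident (val e) x && (colour (val e) x)].
Definition red_at_x' := [exists e : oldE, incident (val e) x' && (colour (val e) x')].
Definition bich_xx' := [exists e : oldE, bichromatic (val e) && joins (val e) x x'].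

(* new edges: 0 = step (1) at x, 1 = step (1) at x', 2 = step (2) *)
Definition add_new (k : 'I_3) : bool :=
  match val k with
  | 0 => ~~ red_at_x
  | 1 => ~~ red_at_x'
  | _ => [&& red_at_x, red_at_x' & ~~ bich_xx']
  end.

Definition newE : finType := {k : 'I_3 | add_new k}.
Definition bE : finType := (oldE + newE)%type.

Definition bsrc (e : bE) : bV :=
  match e with
  | inl e => exist _ (src (val e)) (proj1 (andP (valP e)))
  | inr _ => bx
  end.
Definition btgt (e : bE) : bV :=
  match e with
  | inl e => exist _ (tgt (val e)) (proj2 (andP (valP e)))
  | inr _ => bx'
  end.
Definition bcsrc (e : bE) : bool :=
  match e with
  | inl e => csrc (val e)
  | inr k => match val (val k) with 0 => true | 1 => false | _ => redx2 end
  end.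
Definition bctgt (e : bE) : bool :=
  match e with
  | inl e => ctgt (val e)
  | inr k => match val (val k) with 0 => false | 1 => true | _ => ~~ redx2 end
  end.

Definition wblock : mgraph := MGraph bsrc btgt bcsrc bctgt.
End WBlock.

(* Main.v *)
Require Import Defs.
From HB Require Import structures.
From mathcomp Require Import all_boot.
Set Implicit Arguments. Unset Strict Implicit. Unset Printing Implicit Defensive.

Lemma card1P' (T : finType) (A : {set T}) :
  #|A| = 1 <-> (exists a, a \in A) /\ (forall a b, a \in A -> b \in A -> a = b).
Proof.
split.
- move/eqP/cards1P=> [a ->]; split; first by exists a; rewrite inE.
  by move=> b c; rewrite !inE => /eqP -> /eqP ->.
- move=> [[a Ha] U]; apply/eqP/cards1P; exists a; apply/setP=> b; rewrite inE.
  apply/idP/eqP=> [Hb|->//]; exact: U.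
Qed.

Lemma card_sumb (T : finType) (A : {set T}) (P : pred T) :
  #|[set e in A | P e]| = \sum_(e in A) (P e : nat).
Proof.
rewrite -sum1_card [RHS](eq_bigr (fun e => if P e then 1 else 0)); last by move=> i _; case: (P i).
rewrite -big_mkcondr; apply: eq_bigl => e; by rewrite !inE.
Qed.

Section Gen.
Variable G : mgraph.
Implicit Types (M N : {set edg G}) (S P : {set vtx G}).

Definition cov N S := forall v, v \in S -> #|[set e in N | incident e v]| = 1.
Definition ins N S := forall e, e \in N -> (src e \in S) && (tgt e \in S).
Definition closedM M P := forall e, e \in M -> (src e \in P) = (tgt e \in P).
Definition Mres M P := [set e in M | src e \in P].
Definition nobich N := forall e, e \in N -> ~~ bichromatic e.

Lemma covI N S : (forall v, v \in S -> exists2 e, e \in N & incident e v) ->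
  (forall v e1 e2, v \in S -> e1 \in N -> e2 \in N -> incident e1 v -> incident e2 v -> e1 = e2) ->
  cov N S.
Proof.
move=> H1 H2 v Hv; apply/card1P'; split.
  by have [e He Hi] := H1 v Hv; exists e; rewrite inE He Hi.
by move=> a b; rewrite !inE => /andP[Ha Ia] /andP[Hb Ib]; apply: (H2 v).
Qed.

Lemma cov_ex N S v : cov N S -> v \in S -> exists2 e, e \in N & incident e v.
Proof.
move=> H Hv; have [[e He] _] := (card1P' _).1 (H v Hv).
by move: He; rewrite inE => /andP[]; exists e.
Qed.

Lemma cov_uniq N S v e1 e2 : cov N S -> v \in S -> e1 \in N -> e2 \in N ->
  incident e1 v -> incident e2 v -> e1 = e2.
Proof.
move=> H Hv H1 H2 I1 I2; have [_ U] := (card1P' _).1 (H v Hv).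
by apply: U; rewrite inE ?H1 ?H2 ?I1 ?I2.
Qed.

Lemma pm_cov M S : perfect_matching M -> cov M S.
Proof. by move=> H v _; apply: H. Qed.

Lemma cov_pm M : cov M setT -> perfect_matching M.
Proof. by move=> H v; apply: H; rewrite inE. Qed.

Lemma closedMC M P : closedM M P -> closedM M (~: P).
Proof. by move=> H e He; rewrite !inE H. Qed.

Lemma closed_inc M P e v : closedM M P -> e \in M -> incident e v ->
  (src e \in P) = (v \in P).
Proof.
move=> H He; rewrite /incident => /orP[]/eqP <- //; exact: H.
Qed.

Lemma Mres_ins M P : closedM M P -> ins (Mres M P) P.
Proof. by move=> H e; rewrite inE => /andP[He Hs]; rewrite Hs -H. Qed.

Lemma Mres_sub M P : Mres M P \subset M.
Proof. by apply/subsetP=> e; rewrite inE => /andP[]. Qed.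

Lemma Mres_cov M P : perfect_matching M -> closedM M P -> cov (Mres M P) P.
Proof.
move=> PM H; apply: covI.
  move=> v Hv; have [e He Hi] := cov_ex (pm_cov (S:=P) PM) Hv.
  by exists e => //; rewrite inE He (closed_inc H He Hi) Hv.
move=> v e1 e2 Hv; rewrite !inE => /andP[H1 _] /andP[H2 _].
exact: (cov_uniq (pm_cov (S:=P) PM) Hv).
Qed.

Lemma glue N1 N2 S : ins N1 S -> cov N1 S -> ins N2 (~: S) -> cov N2 (~: S) ->
  perfect_matching (N1 :|: N2).
Proof.
move=> I1 C1 I2 C2; apply: cov_pm; apply: covI.
  move=> v _; case: (boolP (v \in S)) => Hv.
    by have [e He Hi] := cov_ex C1 Hv; exists e; rewrite // inE He.
  have Hv' : v \in ~: S by rewrite inE.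
  by have [e He Hi] := cov_ex C2 Hv'; exists e; rewrite // inE He orbT.
have side1 : forall e v, e \in N1 -> incident e v -> v \in S.
  by move=> e v He; have /andP[a b] := I1 e He; rewrite /incident => /orP[]/eqP<-.
have side2 : forall e v, e \in N2 -> incident e v -> v \in ~: S.
  by move=> e v He; have /andP[a b] := I2 e He; rewrite /incident => /orP[]/eqP<-.
move=> v e1 e2 _; rewrite !inE => /orP[H1|H1] /orP[H2|H2] J1 J2.
- exact: (cov_uniq C1 (side1 _ _ H1 J1)).
- by have := side1 _ _ H1 J1; have := side2 _ _ H2 J2; rewrite inE => /negP.
- by have := side1 _ _ H2 J2; have := side2 _ _ H1 J1; rewrite inE => /negP.
- exact: (cov_uniq C2 (side2 _ _ H1 J1)).
Qed.

Lemma sum_eq1 (T : finType) (S : {set T}) (a : T) :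
  \sum_(v in S) ((a == v) : nat) = (a \in S).
Proof.
case: (boolP (a \in S)) => Ha.
  rewrite (bigD1 a) //= eqxx big1 // => v /andP[_ Hv]; by rewrite eq_sym (negbTE Hv).
by rewrite big1 // => v Hv; case: eqP => // E; move: Ha; rewrite E Hv.
Qed.

Lemma parity M S : loopless G -> cov M S ->
  odd #|S| = odd #|[set e in M | (src e \in S) (+) (tgt e \in S)]|.
Proof.
move=> LL H.
have E1 : #|S| = \sum_(v in S) \sum_(e in M) (incident e v : nat).
  rewrite -sum1_card; apply: eq_bigr => v Hv; by rewrite -card_sumb H.
have E2 : forall e, \sum_(v in S) (incident e v : nat) = (src e \in S) + (tgt e \in S).
  move=> e; rewrite -!sum_eq1 -big_split /=; apply: eq_bigr => v _.
  rewrite /incident; have := LL e; case: (src e == v) / eqP => [<-|_].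
    by move=> /negbTE; rewrite eq_sym => ->.
  by case: (tgt e == v).
rewrite E1 exchange_big /= (eq_bigr _ (fun e _ => E2 e)).
rewrite (eq_bigr (fun e => ((src e \in S) (+) (tgt e \in S) : nat) + 2 * ((src e \in S) && (tgt e \in S)))); last first.
  by move=> e _; case: (src e \in S); case: (tgt e \in S).
by rewrite big_split /= -big_distrr /= oddD oddM /= addbF card_sumb.
Qed.

End Gen.


Lemma sum2 (T : finType) (a b : T) (f : T -> nat) : a != b ->
  \sum_(v in [set a; b]) f v = f a + f b.
Proof. by move=> ab; rewrite big_setU1 ?big_set1 // inE. Qed.

Section Main.
Variables (G : mgraph) (X X' : {set vtx G}) (x x' : vtx G) (C : {set vtx G}).
Hypotheses (W : Wstate G) (cX : is_component (mrel G) X) (cX' : is_component (mrel G) X')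
  (nXX : X != X') (xX : x \in X) (xX' : x' \in X') (cut : two_vertex_cut x x')
  (cC : component_minus x x' C).

Implicit Types (M N : {set edg G}) (e : edg G) (u v : vtx G).
Let S2 := [set x; x'].
Let B := bset x x' C.
Let D := ~: B.

Lemma LL : loopless G. Proof. by case: W. Qed.
Lemma MB : mono_blue G. Proof. by case: W. Qed.
Lemma MCov : matching_covered G. Proof. by case: W. Qed.
Lemma PM1 M : perfect_matching M -> #|[set e in M | bichromatic e]| = 1.
Proof. by case: W => _ _ _ H _; apply: H. Qed.
Lemma RED v : exists e, incident e v /\ colour e v = true.
Proof. by case: W => _ _ _ _ H; apply: H. Qed.

Lemma red_bich e v : colour e v = true -> bichromatic e.
Proof.
move=> H; case: (boolP (bichromatic e)) => // nb; have [/negbTE a /negbTE b] := MB nb.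
by move: H; rewrite /colour a b; case: ifP.
Qed.

Lemma PMex M : perfect_matching M -> exists2 e, e \in M & bichromatic e.
Proof. move/PM1/card1P' => [[e]]; rewrite inE => /andP[] ? ? _; by exists e. Qed.

Lemma PMuniq M e1 e2 : perfect_matching M -> e1 \in M -> e2 \in M ->
  bichromatic e1 -> bichromatic e2 -> e1 = e2.
Proof. move/PM1/card1P' => [_ U] ? ? ? ?; apply: U; by rewrite inE; apply/andP. Qed.

Lemma joins_sym e u v : joins e u v = joins e v u.
Proof. by rewrite /joins orbC. Qed.

Lemma mrel_sym : symmetric (mrel G).
Proof.
move=> u v; apply/existsP/existsP => [][e He]; exists e; by rewrite joins_sym.
Qed.

Lemma adjm_sym (S : {set vtx G}) : symmetric (adj_minus S).
Proof.
move=> u v; rewrite /adj_minus andbCA; congr [&& _, _ & _].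
apply/existsP/existsP => [][e He]; exists e; by rewrite joins_sym.
Qed.

Lemma mono_side e : ~~ bichromatic e -> (src e \in X) = (tgt e \in X).
Proof.
move=> nb; case: cX => r ->; rewrite !inE.
have h1 : mrel G (src e) (tgt e) by apply/existsP; exists e; rewrite nb /joins !eqxx.
have h2 : mrel G (tgt e) (src e) by rewrite mrel_sym.
apply/idP/idP => H; apply: connect_trans H _; exact: connect1.
Qed.

Lemma x'_notX : x' \notin X.
Proof.
apply/negP => H; move/negP: nXX; apply; apply/eqP.
case: cX H => r ->; case: cX' xX' => r' -> ; rewrite !inE => H1 H2.
have sc := sym_connect_sym mrel_sym.
have : connect (mrel G) r r' by apply: connect_trans H2 _; rewrite sc.
move/(same_connect sc) => E; apply/setP => u; by rewrite !inE E.
Qed.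

Lemma xx' : x != x'.
Proof. by case: cut. Qed.

Lemma C_def : exists2 v0, v0 \notin S2 & C = [set u | connect (adj_minus S2) v0 u].
Proof. exact: cC. Qed.

Lemma C_notS u : u \in C -> u \notin S2.
Proof.
case: C_def => v0 nv0 ->; rewrite inE => /connectP[p pth ->].
elim/last_ind: p pth => [//|p y _]; rewrite rcons_path last_rcons => /andP[_].
by case/and3P.
Qed.

Lemma C_adj e : (src e \in C) -> (tgt e \in C) || (tgt e \in S2).
Proof.
move=> Hs; case: (boolP (tgt e \in S2)) => Ht; rewrite ?orbT // orbF.
have ns := C_notS Hs; move: Hs; case: C_def => v0 _ E; rewrite E !inE => Hs.
apply: connect_trans Hs (connect1 _); rewrite /adj_minus ns Ht /=.
by apply/existsP; exists e; rewrite /joins !eqxx.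
Qed.

Lemma C_adj' e : (tgt e \in C) -> (src e \in C) || (src e \in S2).
Proof.
move=> Hs; case: (boolP (src e \in S2)) => Ht; rewrite ?orbT // orbF.
have ns := C_notS Hs; move: Hs; case: C_def => v0 _ E; rewrite E !inE => Hs.
apply: connect_trans Hs (connect1 _); rewrite /adj_minus ns Ht /=.
by apply/existsP; exists e; rewrite /joins !eqxx orbT.
Qed.

Lemma C_nonempty : exists c, c \in C.
Proof. case: C_def => v0 _ ->; exists v0; by rewrite inE connect0. Qed.

Lemma D_nonempty : exists d, (d \notin C) && (d \notin S2).
Proof.
case: cut => _ [u [v [hu hv nc]]].
case: (boolP (u \in C)) => uC; last by exists u; rewrite uC hu.
case: (boolP (v \in C)) => vC; last by exists v; rewrite vC hv.
move: uC vC nc; case: C_def => v0 _ ->; rewrite !inE => uC vC.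
have sc := sym_connect_sym (adjm_sym S2).
by rewrite (connect_trans _ vC) // sc.
Qed.

Lemma inB v : (v \in B) = [|| v == x, v == x' | v \in C].
Proof. by rewrite /B /bset !inE. Qed.

Lemma inS2 v : (v \in S2) = (v == x) || (v == x').
Proof. by rewrite /S2 !inE. Qed.


Lemma cross_bich e : (src e \in X) (+) (tgt e \in X) -> bichromatic e.
Proof.
move=> H; case: (boolP (bichromatic e)) => // nb; by move: H; rewrite (mono_side nb) addbb.
Qed.

Lemma crossM M : perfect_matching M ->
  odd #|X| = odd #|[set e in M | (src e \in X) (+) (tgt e \in X)]|.
Proof. move=> PM; apply: parity LL (pm_cov PM). Qed.

Lemma cross_le1 M : perfect_matching M ->
  #|[set e in M | (src e \in X) (+) (tgt e \in X)]| <= 1.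
Proof.
move=> PM; rewrite -(PM1 PM); apply: subset_leq_card; apply/subsetP=> e.
by rewrite !inE => /andP[-> /cross_bich].
Qed.

Lemma oddX : odd #|X|.
Proof.
apply/negPn/negP => nX.
have noC : forall e, (src e \in X) = (tgt e \in X).
  move=> e; have [M [PM He]] := MCov e.
  case: (boolP ((src e \in X) (+) (tgt e \in X))) => H; last by move: H; case: (src e \in X); case: (tgt e \in X).
  have := cross_le1 PM; have := crossM PM; rewrite (negbTE nX).
  have : 0 < #|[set e in M | (src e \in X) (+) (tgt e \in X)]|.
    by apply/card_gt0P; exists e; rewrite inE He H.
  by case: #|_| => [|[|]].
have clo : forall M, closedM M X by move=> M e _; apply: noC.
have [g [ig cg]] := RED x; have [g' [ig' cg']] := RED x'.
have [M1 [P1 g1]] := MCov g; have [M2 [P2 g2]] := MCov g'.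
have PMg : perfect_matching (Mres M2 X :|: Mres M1 (~: X)).
  apply: (glue (S:=X)); [exact: Mres_ins | exact: Mres_cov | |].
  exact: Mres_ins (closedMC (clo _)). exact: Mres_cov (closedMC (clo _)).
have [b Hb bb] := PMex PMg; move: Hb; rewrite !inE => /orP[]/andP[Hb sb].
  have E := PMuniq P2 Hb g2 bb (red_bich cg'); subst b.
  by move: sb; rewrite (closed_inc (clo M2) g2 ig') (negbTE x'_notX).
have E := PMuniq P1 Hb g1 bb (red_bich cg); subst b.
by move: sb; rewrite (closed_inc (clo M1) g1 ig) xX.
Qed.

Lemma crossE e : bichromatic e = (src e \in X) (+) (tgt e \in X).
Proof.
case: (boolP (bichromatic e)) => nb; last by rewrite (mono_side nb) addbb.
have [M [PM He]] := MCov e.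
have : 0 < #|[set e in M | (src e \in X) (+) (tgt e \in X)]|.
  by move: (crossM PM); rewrite oddX; case: #|_|.
case/card_gt0P => e1; rewrite inE => /andP[H1 c1].
by rewrite -(PMuniq PM H1 He (cross_bich c1) nb).
Qed.

Definition PC M := locked [set v | [exists e, [&& e \in M, incident e v & (src e \in C) || (tgt e \in C)]]].

Lemma PC_inc M e v : perfect_matching M -> e \in M -> incident e v ->
  (v \in PC M) = (src e \in C) || (tgt e \in C).
Proof.
move=> PM He Ie; rewrite /PC -lock inE; apply/existsP/idP => [[e' /and3P[He' Ie' Te']]|T].
  by rewrite -(cov_uniq (pm_cov (S:=setT) PM) (in_setT v) He' He Ie' Ie).
by exists e; rewrite He Ie T.
Qed.

Lemma inc_src e : incident e (src e). Proof. by rewrite /incident eqxx. Qed.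
Lemma inc_tgt e : incident e (tgt e). Proof. by rewrite /incident eqxx orbT. Qed.

Lemma PC_closed M : perfect_matching M -> closedM M (PC M).
Proof.
move=> PM e He; by rewrite (PC_inc PM He (inc_src e)) (PC_inc PM He (inc_tgt e)).
Qed.

Lemma C_PC M v : perfect_matching M -> v \in C -> v \in PC M.
Proof.
move=> PM vC; have [e He Ie] := cov_ex (pm_cov (S:=setT) PM) (in_setT v).
rewrite (PC_inc PM He Ie); move: Ie; rewrite /incident => /orP[]/eqP ->; by rewrite vC ?orbT.
Qed.

Lemma PC_sub M v : perfect_matching M -> v \in PC M -> (v \in C) || (v \in S2).
Proof.
move=> PM; have [e He Ie] := cov_ex (pm_cov (S:=setT) PM) (in_setT v).
rewrite (PC_inc PM He Ie); move: Ie; rewrite /incident => /orP[]/eqP <- /orP[] h;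
  rewrite ?h ?orbT //; first [exact: (C_adj h) | exact: (C_adj' h)].
Qed.

Lemma PC_even M : perfect_matching M -> ~~ odd #|PC M|.
Proof.
move=> PM; rewrite (parity LL (pm_cov PM)).
rewrite (eq_card0 (_ : _ =i pred0)) // => e; rewrite [in LHS]inE.
case: (boolP (e \in M)) => //= He; by rewrite (PC_closed PM He) addbb.
Qed.

Lemma PCdiff M : perfect_matching M -> PC M :\: S2 = C.
Proof.
move=> PM; apply/setP => v; rewrite inE; apply/andP/idP => [[ns P]|vC].
  by have := PC_sub PM P; rewrite (negbTE ns) orbF.
by rewrite (C_notS vC) (C_PC PM vC).
Qed.

Lemma PCXdiff M : perfect_matching M -> (PC M :&: X) :\: S2 = C :&: X.
Proof.
move=> PM; rewrite -(PCdiff PM); apply/setP => v; rewrite !in_setD !in_setI.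
by rewrite in_setD; case: (v \in S2); case: (v \in X); case: (v \in PC M).
Qed.

Lemma card_PC M : perfect_matching M -> #|PC M| = #|C| + (x \in PC M) + (x' \in PC M).
Proof.
move=> PM; rewrite -(cardsID S2 (PC M)) (PCdiff PM) addnC -addnA; congr (_ + _).
rewrite (_ : PC M :&: S2 = [set v in S2 | v \in PC M]); last first.
  by apply/setP => v; rewrite !inE andbC.
by rewrite (@card_sumb _ S2 (fun v => v \in PC M)) /S2 sum2 ?xx'.
Qed.

Lemma card_PCX M : perfect_matching M -> #|PC M :&: X| = #|C :&: X| + (x \in PC M).
Proof.
move=> PM; rewrite -(cardsID S2 (PC M :&: X)) (PCXdiff PM) addnC; congr (_ + _).
rewrite (_ : (PC M :&: X) :&: S2 = [set v in S2 | v \in PC M :&: X]); last first.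
  by apply/setP => v; rewrite !inE andbC.
by rewrite (@card_sumb _ S2 (fun v => v \in PC M :&: X)) /S2 sum2 ?xx' // !inE xX (negbTE x'_notX) andbF addn0 andbT.
Qed.

Lemma PCX_par M : perfect_matching M ->
  odd #|PC M :&: X| = odd #|[set e in M | bichromatic e && (src e \in PC M)]|.
Proof.
move=> PM; rewrite (parity LL (pm_cov PM)); congr (odd _); apply: eq_card => e; rewrite [in LHS]inE [in RHS]inE !in_setI.
case: (boolP (e \in M)) => //= He; rewrite -(PC_closed PM He) crossE.
by case: (src e \in PC M); case: (src e \in X); case: (tgt e \in X).
Qed.

Lemma bichP_card M g v : perfect_matching M -> g \in M -> bichromatic g -> incident g v ->
  #|[set e in M | bichromatic e && (src e \in PC M)]| = (v \in PC M).
Proof.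
move=> PM Hg bg Ig; rewrite -(closed_inc (PC_closed PM) Hg Ig).
case: (boolP (src g \in PC M)) => Hs.
  rewrite (_ : [set e in M | _] = [set g]) ?cards1 //; apply/setP => e; rewrite !inE.
  apply/idP/eqP => [/and3P[He be _]|->]; first exact: PMuniq PM He Hg be bg.
  by rewrite Hg bg Hs.
apply/eqP; rewrite cards_eq0; apply/eqP/setP => e; rewrite !inE.
apply/negP => /and3P[He be se]; by move: Hs; rewrite -(PMuniq PM He Hg be bg) se.
Qed.

Lemma oddb' (b : bool) : odd b = b. Proof. by case: b. Qed.

Lemma C_even : ~~ odd #|C|.
Proof.
have [g [ig cg]] := RED x; have [g' [ig' cg']] := RED x'.
have [M1 [P1 g1]] := MCov g; have [M2 [P2 g2]] := MCov g'.
have h1 := PCX_par P1; rewrite (bichP_card P1 g1 (red_bich cg) ig) card_PCX // oddD oddb' in h1.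
have h2 := PCX_par P2; rewrite (bichP_card P2 g2 (red_bich cg') ig') card_PCX // oddD oddb' in h2.
have h3 := PC_even P2; rewrite card_PC // !oddD !oddb' in h3.
move: h1 h2 h3; case: (odd #|C :&: X|); case: (odd #|C|);
  case: (x \in PC M1); case: (x \in PC M2); by case: (x' \in PC M2).
Qed.

Lemma PC_cases M : perfect_matching M -> PC M = C \/ PC M = B.
Proof.
move=> PM; have h := PC_even PM; rewrite card_PC // !oddD !oddb' (negbTE C_even) /= in h.
have key : forall v, (v \in PC M) = (v \in C) || ((v \in S2) && (v \in PC M)).
  move=> v; case: (boolP (v \in PC M)) => P; last by rewrite andbF orbF; case: (boolP (v \in C)) => // /(C_PC PM); rewrite (negbTE P).
  by have := PC_sub PM P; rewrite andbT.
case: (boolP (x \in PC M)) => a; rewrite ?(negbTE a) ?a /= in h.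
  right; apply/setP => v; rewrite key inB inS2.
  case: (v =P x) => [->|_] /=; first by rewrite a orbT.
  case: (v =P x') => [->|_] /=; last by rewrite ?andbF ?orbF.
  by move/negPn: h => ->; rewrite ?orbT.
left; apply/setP => v; rewrite key inS2.
case: (v =P x) => [->|_] /=; first by rewrite (negbTE a) ?andbF ?orbF.
case: (v =P x') => [->|_] /=; last by rewrite ?andbF ?orbF.
by rewrite (negbTE h) ?andbF ?orbF.
Qed.

Definition Bprop := exists ND, [/\ ins ND D, cov ND D & nobich ND].
Definition Cprop := exists K NC, [/\ ins K (~: C), cov K (~: C),
  (exists2 e, e \in K & bichromatic e), ins NC C & cov NC C].

Lemma Cprop_nobich : Cprop -> forall NC, ins NC C -> cov NC C -> nobich NC.
Proof.
move=> [K [NC0 [IK CK [e0 He0 b0] _ _]]] NC IC CC e He; apply/negP => be.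
have PM := glue IC CC IK CK.
have E := PMuniq PM (_ : e \in NC :|: K) (_ : e0 \in NC :|: K) be b0.
have /andP[s1 _] := IC e He; have /andP[s2 _] := IK e0 He0.
by move: s2; rewrite -E ?inE ?He ?He0 ?orbT // s1.
Qed.

Lemma Bprop_one : Bprop -> forall NB, ins NB B -> cov NB B ->
  (exists2 e, e \in NB & bichromatic e) /\
  (forall e1 e2, e1 \in NB -> e2 \in NB -> bichromatic e1 -> bichromatic e2 -> e1 = e2).
Proof.
move=> [ND [ID CD nD]] NB IB CB.
have PM := glue IB CB ID CD.
split.
  have [e He be] := PMex PM; move: He; rewrite inE => /orP[H|H]; first by exists e.
  by move: (nD e H); rewrite be.
move=> e1 e2 H1 H2; apply: PMuniq PM _ _; by rewrite inE ?H1 ?H2.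
Qed.

Lemma PCB_closedD M : perfect_matching M -> PC M = B -> closedM M D.
Proof. move=> PM E; rewrite /D -E; exact: closedMC (PC_closed PM). Qed.

Lemma PCB_closedB M : perfect_matching M -> PC M = B -> closedM M B.
Proof. move=> PM <-; exact: PC_closed PM. Qed.

Lemma PCC_closedC M : perfect_matching M -> PC M = C -> closedM M C.
Proof. move=> PM <-; exact: PC_closed PM. Qed.

Lemma PCC_closedCC M : perfect_matching M -> PC M = C -> closedM M (~: C).
Proof. move=> PM E; exact: closedMC (PCC_closedC PM E). Qed.

Lemma xB : x \in B. Proof. by rewrite inB eqxx. Qed.
Lemma x'B : x' \in B. Proof. by rewrite inB eqxx orbT. Qed.
Lemma xnC : x \notin C. Proof. apply/negP => /C_notS; by rewrite inS2 eqxx. Qed.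
Lemma x'nC : x' \notin C. Proof. apply/negP => /C_notS; by rewrite inS2 eqxx orbT. Qed.
Lemma CB v : v \in C -> v \in B. Proof. by move=> h; rewrite inB h !orbT. Qed.

Lemma BorC : Bprop \/ Cprop.
Proof.
have [g [ig cg]] := RED x; have [M [PM gM]] := MCov g.
have bg := red_bich cg.
case: (PC_cases PM) => E.
  right; exists (Mres M (~: C)), (Mres M C); split.
  - exact: Mres_ins (PCC_closedCC PM E).
  - exact: Mres_cov PM (PCC_closedCC PM E).
  - exists g => //; rewrite inE gM (closed_inc (PCC_closedCC PM E) gM ig) inE; exact: xnC.
  - exact: Mres_ins (PCC_closedC PM E).
  - exact: Mres_cov PM (PCC_closedC PM E).
left; exists (Mres M D); split.
- exact: Mres_ins (PCB_closedD PM E).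
- exact: Mres_cov PM (PCB_closedD PM E).
move=> e; rewrite inE => /andP[He sD]; apply/negP => be.
have E1 := PMuniq PM He gM be bg; subst e.
by move: sD; rewrite (closed_inc (PCB_closedD PM E) gM ig) inE xB.
Qed.

Lemma CtoB : Cprop -> Bprop.
Proof.
move=> HC; have [c cC'] := C_nonempty.
have [e [ie ce]] := RED c; have [M [PM eM]] := MCov e; have be := red_bich ce.
case: (PC_cases PM) => E.
  have := Cprop_nobich HC (Mres_ins (PCC_closedC PM E)) (Mres_cov PM (PCC_closedC PM E)).
  move=> /(_ e); rewrite inE eM (closed_inc (PCC_closedC PM E) eM ie) cC' be; by move=> /(_ isT).
exists (Mres M D); split.
- exact: Mres_ins (PCB_closedD PM E).
- exact: Mres_cov PM (PCB_closedD PM E).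
move=> e1; rewrite inE => /andP[He sD]; apply/negP => be1.
have E1 := PMuniq PM He eM be1 be; subst e1.
by move: sD; rewrite (closed_inc (PCB_closedD PM E) eM ie) inE (CB cC').
Qed.

Lemma BtoC : Bprop -> Cprop.
Proof.
move=> HB; have [d /andP[dC dS]] := D_nonempty.
have dB : d \notin B.
  by rewrite inB; move: dS; rewrite inS2; case: (d == x); case: (d == x'); rewrite //= (negbTE dC).
have [e [ie ce]] := RED d; have [M [PM eM]] := MCov e; have be := red_bich ce.
case: (PC_cases PM) => E.
  exists (Mres M (~: C)), (Mres M C); split.
  - exact: Mres_ins (PCC_closedCC PM E).
  - exact: Mres_cov PM (PCC_closedCC PM E).
  - exists e => //; rewrite inE eM (closed_inc (PCC_closedCC PM E) eM ie) inE; exact: dC.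
  - exact: Mres_ins (PCC_closedC PM E).
  - exact: Mres_cov PM (PCC_closedC PM E).
have [[e1 H1 b1] _] := Bprop_one HB (Mres_ins (PCB_closedB PM E)) (Mres_cov PM (PCB_closedB PM E)).
move: H1; rewrite inE => /andP[H1 s1].
have E1 := PMuniq PM H1 eM b1 be; subst e1.
by move: s1; rewrite (closed_inc (PCB_closedB PM E) eM ie) (negbTE dB).
Qed.

Lemma Bprop_holds : Bprop.
Proof. by case: BorC => [//|/CtoB]. Qed.

Lemma Cprop_holds : Cprop.
Proof. by case: BorC => [/BtoC|]. Qed.

Section H.
Variable r : bool.
Let H := wblock x x' C r.
Let V := bV x x' C.
Let OE := oldE x x' C.

Lemma incH_old (e' : OE) (v : V) : incident (G:=H) (inl e') v = incident (val e') (val v).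
Proof. by rewrite /incident -!val_eqE. Qed.

Lemma incH_new k (v : V) : incident (G:=H) (inr k) v = (x == val v) || (x' == val v).
Proof. by rewrite /incident -!val_eqE. Qed.

Lemma bichH_old (e' : OE) : bichromatic (G:=H) (inl e') = bichromatic (val e').
Proof. by []. Qed.

Lemma bichH_new k : bichromatic (G:=H) (inr k).
Proof. by case: k => [[[|[|n]] hn] hk]; rewrite /bichromatic /= ?addbN ?addbb //; case: r. Qed.

Lemma colH_old (e' : OE) (v : V) : colour (G:=H) (inl e') v = colour (val e') (val v).
Proof. by rewrite /colour -!val_eqE. Qed.

Definition oldset (NG : {set edg G}) : {set bE x x' C} :=
  [set g : bE x x' C | if g is inl e' then val e' \in NG else false].
Definition Nold (N : {set bE x x' C}) : {set edg G} :=
  [set e | [exists e' : OE, (inl e' \in N) && (val e' == e)]].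

Lemma in_oldset NG (e' : OE) : (inl e' \in oldset NG) = (val e' \in NG).
Proof. by rewrite inE. Qed.
Lemma in_oldset_r NG k : (inr k \in oldset NG) = false.
Proof. by rewrite inE. Qed.

Lemma Hcover_B NB : ins NB B -> cov NB B -> perfect_matching (G:=H) (oldset NB).
Proof.
move=> I Cv v; apply/card1P'; split.
  have [e He Ie] := cov_ex Cv (valP v).
  exists (inl (Sub e (I e He) : OE)); by rewrite inE in_oldset incH_old SubK He Ie.
move=> [a|a] [b|b]; rewrite !inE ?in_oldset ?in_oldset_r //= ?incH_old.
move=> /andP[Ha Ia] /andP[Hb Ib]; congr inl; apply: val_inj.
exact: (cov_uniq Cv (valP v) Ha Hb Ia Ib).
Qed.

Lemma Hcover_C NC h : ins NC C -> cov NC C ->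
  (forall v : V, incident (G:=H) h v = (x == val v) || (x' == val v)) ->
  perfect_matching (G:=H) (oldset NC :|: [set h]).
Proof.
move=> I Cv Hh v; apply/card1P'.
case: (boolP (val v \in C)) => vC.
  split.
    have [e He Ie] := cov_ex Cv vC.
    have IB : (src e \in B) && (tgt e \in B) by have /andP[] := I e He; move=> /CB -> /CB ->.
    exists (inl (Sub e IB : OE)); by rewrite inE in_setU in_oldset incH_old SubK He Ie.
  have notH : forall g, g \in [set h] -> incident (G:=H) g v -> False.
    move=> g; rewrite inE => /eqP -> ; rewrite Hh => /orP[]/eqP E; move: vC; rewrite -E.
      by rewrite (negbTE xnC). by rewrite (negbTE x'nC).
  move=> a b; rewrite !inE => /andP[/orP[Ha|Ha] Ia]; last by case: (notH a); rewrite ?inE.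
  move=> /andP[/orP[Hb|Hb] Ib]; last by case: (notH b); rewrite ?inE.
  move: Ha Hb Ia Ib; case: a => a; case: b => b; rewrite ?inE //= ?incH_old.
  move=> Ha Hb Ia Ib; congr inl; apply: val_inj; exact: (cov_uniq Cv vC Ha Hb Ia Ib).
have vS : (x == val v) || (x' == val v).
  have := valP v; rewrite -/B inB (negbTE vC) orbF; by rewrite ![val v == _]eq_sym.
have noold : forall g, g \in oldset NC -> incident (G:=H) g v -> False.
  case=> g; rewrite ?in_oldset ?in_oldset_r // incH_old => Hg Ig.
  have /andP[s t] := I _ Hg; move: Ig; rewrite /incident => /orP[]/eqP E; move: vC; by rewrite -E ?s ?t.
split; first by exists h; rewrite !inE eqxx orbT Hh vS.
move=> a b; rewrite in_set in_setU in_set1 => /andP[/orP[Ha|/eqP ->] Ia]; first by case: (noold a Ha Ia).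
rewrite in_set in_setU in_set1 => /andP[/orP[Hb|/eqP ->] Ib] //; by case: (noold b Hb Ib).
Qed.

Lemma Nold_val (N : {set bE x x' C}) (e' : OE) : (val e' \in Nold N) = (inl e' \in N).
Proof.
rewrite inE; apply/existsP/idP => [[e'' /andP[H1 /eqP E]]|H1]; last by exists e'; rewrite H1 eqxx.
by rewrite -(val_inj E).
Qed.

Lemma Nold_mem (N : {set bE x x' C}) e : e \in Nold N -> exists2 e' : OE, inl e' \in N & val e' = e.
Proof. by rewrite inE => /existsP[e' /andP[H0 /eqP E]]; exists e'. Qed.

Lemma vB (v : V) : val v \in B. Proof. exact: valP v. Qed.

Lemma Nold_cov (N : {set bE x x' C}) (S : {set vtx G}) : perfect_matching (G:=H) N -> (forall u, u \in S -> u \in B) ->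
  (forall k (v : V), val v \in S -> inr k \in N -> incident (G:=H) (inr k) v -> False) ->
  cov (Nold N) S.
Proof.
move=> PM SB noN; apply: covI.
  move=> u uS; have uB := SB u uS; pose v : V := Sub u uB.
  have [[g]] := (card1P' _).1 (PM v); rewrite inE => /andP[gN gI] _.
  case: g gN gI => [e'|k] gN gI; last by case: (noN k v); rewrite ?SubK.
  by exists (val e'); rewrite ?Nold_val // -incH_old.
move=> u e1 e2 uS H1 H2; have uB := SB u uS; pose v : V := Sub u uB.
have [e1' N1 <-] := Nold_mem H1; have [e2' N2 <-] := Nold_mem H2.
move=> I1 I2.
have J1 : incident (G:=H) (inl e1') v by rewrite incH_old SubK.
have J2 : incident (G:=H) (inl e2') v by rewrite incH_old SubK.
have [_ U] := (card1P' _).1 (PM v).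
have : inl e1' = inl e2' :> edg H by apply: U; rewrite inE ?N1 ?N2 ?J1 ?J2.
by case=> ->.
Qed.

Lemma Nold_insB (N : {set bE x x' C}) : ins (Nold N) B.
Proof. by move=> e /Nold_mem [e' _ <-]; exact: valP e'. Qed.

Lemma Nold_insC (N : {set bE x x' C}) k : perfect_matching (G:=H) N -> inr k \in N -> ins (Nold N) C.
Proof.
move=> PM kN e /Nold_mem [e' eN <-].
have ends : forall w (hw : w \in B), w \in S2 -> incident (val e') w -> False.
  move=> w hw; rewrite inS2 => wS Iw.
  have [_ U] := (card1P' _).1 (PM (Sub w hw : V)).
  have : inl e' = inr k :> edg H.
    apply: U; rewrite inE ?eN ?kN ?incH_old ?incH_new SubK //=.
    by move: wS => /orP[]/eqP ->; rewrite eqxx ?orbT.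
  by [].
have /andP[sB tB] := valP e'.
apply/andP; split.
  move: (sB); rewrite inB orbA => /orP[wS|//]; case: (ends _ sB); by rewrite ?inS2 ?inc_src.
move: (tB); rewrite inB orbA => /orP[wS|//]; case: (ends _ tB); by rewrite ?inS2 ?inc_tgt.
Qed.

Lemma bx_new k : incident (G:=H) (inr k) (Sub x xB : V).
Proof. by rewrite incH_new SubK eqxx. Qed.

Lemma H_PM1 (N : {set bE x x' C}) : perfect_matching (G:=H) N -> #|[set g in N | bichromatic (G:=H) g]| = 1.
Proof.
move=> PM; apply/card1P'.
case: (boolP [exists k, inr k \in N]) => [/existsP[k kN]|nN].
  have IC := Nold_insC PM kN.
  have CC : cov (Nold N) C.
    apply: Nold_cov PM CB _ => k' v vC _; rewrite incH_new => /orP[]/eqP E; move: vC; rewrite -E.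
      by rewrite (negbTE xnC). by rewrite (negbTE x'nC).
  have nb := Cprop_nobich Cprop_holds IC CC.
  split; first by exists (inr k); rewrite inE kN bichH_new.
  have onlynew : forall g, g \in [set g in N | bichromatic (G:=H) g] -> exists k', g = inr k'.
    case=> [e'|k']; last by exists k'.
    rewrite inE => /andP[gN bg]; have := nb _ (_ : val e' \in Nold N); rewrite Nold_val bichH_old in bg *.
    by move=> /(_ gN); rewrite bg.
  move=> a b Ha Hb; have [ka Ea] := onlynew a Ha; have [kb Eb] := onlynew b Hb.
  move: Ha Hb; rewrite !inE Ea Eb => /andP[Na _] /andP[Nb _].
  have [_ U] := (card1P' _).1 (PM (Sub x xB : V)).
  by apply: U; rewrite inE ?Na ?Nb bx_new.
have noN : forall k, inr k \in N -> False by move=> k kN; move/existsP: nN; apply; exists k.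
have CB' : cov (Nold N) B by apply: Nold_cov PM (fun u h => h) _ => k v _ /noN.
have [[e He be] U] := Bprop_one Bprop_holds (@Nold_insB N) CB'.
split.
  have [e' eN Ee] := Nold_mem He; exists (inl e'); by rewrite inE eN bichH_old Ee.
move=> a b; rewrite !inE => /andP[Na ba] /andP[Nb bb].
case: a Na ba => [a|a] Na ba; last by case: (noN _ Na).
case: b Nb bb => [b|b] Nb bb; last by case: (noN _ Nb).
rewrite !bichH_old in ba bb; congr inl; apply: val_inj; apply: U => //; by rewrite Nold_val.
Qed.

Definition mkN (k : 'I_3) (h : add_new x x' C k) : newE x x' C :=
  exist (fun k => add_new x x' C k) k h.

Lemma joins_inc e w : joins e x x' -> incident e w = (x == w) || (x' == w).
Proof.
by rewrite /joins /incident => /orP[]/andP[/eqP -> /eqP ->] //; rewrite orbC.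
Qed.

Lemma hxx : exists h : edg H, forall v : V, incident (G:=H) h v = (x == val v) || (x' == val v).
Proof.
case: (boolP (red_at_x x x' C)) => rx; last first.
  have hk : add_new x x' C (@Ordinal 3 0 isT) := rx.
  by exists (inr (mkN hk)) => v; rewrite incH_new.
case: (boolP (red_at_x' x x' C)) => rx'; last first.
  have hk : add_new x x' C (@Ordinal 3 1 isT) := rx'.
  by exists (inr (mkN hk)) => v; rewrite incH_new.
case: (boolP (bich_xx' x x' C)) => bb; last first.
  have hk : add_new x x' C (@Ordinal 3 2 isT) by rewrite /add_new /= rx rx' bb.
  by exists (inr (mkN hk)) => v; rewrite incH_new.
case/existsP: bb => e' /andP[_ j]; exists (inl e') => v; by rewrite incH_old joins_inc.
Qed.

Lemma S2_joins e : src e \in S2 -> tgt e \in S2 -> src e != tgt e -> joins e x x'.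
Proof.
rewrite /joins !inS2 => /orP[]/eqP -> /orP[]/eqP ->; by rewrite ?eqxx //= ?andbT ?orbT.
Qed.

Lemma notC_S2 u : u \in B -> u \notin C -> u \in S2.
Proof. by rewrite inB inS2 orbA => /orP[//|->]. Qed.

Lemma H_cov : matching_covered H.
Proof.
move=> [e'|k]; last first.
  have [K [NC [_ _ _ IC CC]]] := Cprop_holds.
  exists (oldset NC :|: [set inr k]); split; last by rewrite in_setU set11 orbT.
  by apply: Hcover_C IC CC _ => v; rewrite incH_new.
have [M [PM eM]] := MCov (val e').
have /andP[sB tB] := valP e'.
case: (PC_cases PM) => E; last first.
  exists (oldset (Mres M B)); split; last by rewrite in_oldset inE eM sB.
  exact: Hcover_B (Mres_ins (PCB_closedB PM E)) (Mres_cov PM (PCB_closedB PM E)).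
have IC := Mres_ins (PCC_closedC PM E); have CC := Mres_cov PM (PCC_closedC PM E).
case: (boolP (src (val e') \in C)) => sC.
  have [h Hh] := hxx; exists (oldset (Mres M C) :|: [set h]); split; first exact: Hcover_C IC CC Hh.
  by apply/setUP; left; rewrite in_oldset inE eM sC.
have tC : tgt (val e') \notin C by rewrite -(PCC_closedC PM E eM).
have j := S2_joins (notC_S2 sB sC) (notC_S2 tB tC) (LL (val e')).
exists (oldset (Mres M C) :|: [set inl e']); split; last by rewrite in_setU set11 orbT.
by apply: Hcover_C IC CC _ => v; rewrite incH_old joins_inc.
Qed.

Lemma H_red (v : V) : exists g : edg H, incident g v /\ colour g v = true.
Proof.
case: (boolP (val v \in C)) => vC.
  have [e [ie ce]] := RED (val v).
  have CSB : forall u, (u \in C) || (u \in S2) -> u \in B.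
    by move=> u /orP[/CB //|]; rewrite inS2 inB orbA => ->.
  have IB : (src e \in B) && (tgt e \in B).
    move: ie; rewrite /incident => /orP[]/eqP E; rewrite -E in vC.
      by rewrite (CB vC) CSB // C_adj.
    by rewrite (CB vC) CSB // C_adj'.
  by exists (inl (Sub e IB : OE)); rewrite incH_old colH_old SubK.
have := vB v; rewrite inB (negbTE vC) orbF => /orP[]/eqP vx.
  case: (boolP (red_at_x x x' C)) => rx.
    case/existsP: rx => e' /andP[i c]; exists (inl e'); by rewrite incH_old colH_old vx.
  have hk : add_new x x' C (@Ordinal 3 0 isT) := rx.
  exists (inr (mkN hk)); rewrite incH_new vx eqxx; split => //.
  by rewrite /colour /= -val_eqE /= vx eqxx.
case: (boolP (red_at_x' x x' C)) => rx.
  case/existsP: rx => e' /andP[i c]; exists (inl e'); by rewrite incH_old colH_old vx.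
have hk : add_new x x' C (@Ordinal 3 1 isT) := rx.
exists (inr (mkN hk)); rewrite incH_new vx eqxx orbT; split => //.
by rewrite /colour /= -val_eqE /= vx (negbTE xx').
Qed.

Lemma H_W : Wstate H.
Proof.
split.
- move=> [e'|k]; rewrite /= -val_eqE /=; [exact: LL | exact: xx'].
- move=> [e'|k]; [exact: MB (val e') | by rewrite bichH_new].
- exact: H_cov.
- exact: H_PM1.
- exact: H_red.
Qed.

End H.

End Main.


Theorem mainTheorem14 (G : mgraph) (X X' : {set vtx G}) (x x' : vtx G) :
  Wstate G ->
  is_component (mrel G) X -> is_component (mrel G) X' -> X != X' ->
  X :|: X' = [set: vtx G] ->
  x \in X -> x' \in X' ->
  two_vertex_cut x x' ->
  forall (C : {set vtx G}), component_minus x x' C ->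
  forall redx2 : bool, Wstate (wblock x x' C redx2).
Proof.
move=> W cX cX' nXX _ xX xX' cut C cC r.
exact: (@H_W G X X' x x' C W cX cX' nXX xX xX' cut cC r).
Qed.
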